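(* Let $\mathcal{V}$ be a variety of groups such that every group in $\mathcal{V}$ is amenable and every relatively free group of $\mathcal{V}$ is right orderable. Then there exists a function $g\colon\mathbb{N}\to\mathbb{N}$ such that for every $Z\in\mathcal{V}$ and every $n$-element subset $U\subseteq Z$ there exists a finite nonempty set $F\subseteq Z$ with $|F|\leq g(n)$ and $|FU|\leq 2|F|$.
   Context: A group is right orderable if it admits a total order invariant under right multiplication. $FU=\{fu: f\in F, u\in U\}$. *)

(* Defs.v *)
From Stdlib Require Import Reals List.
Open Scope R_scope.

Record group := Group {
  carrier :> Type;
  gmul : carrier -> carrier -> carrier;
  gone : carrier;
  ginv : carrier -> carrier;
  gmulA : forall x y z, gmul x (gmul y z) = gmul (gmul x y) z;
  gmul1l : forall x, gmul gone x = x;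
  gmulVl : forall x, gmul (ginv x) x = gone
}.

(* Group words over an alphabet X: letters x^{+1} (true) / x^{-1} (false). *)
Definition word (X : Type) := list (X * bool).

Fixpoint eval (G : group) (X : Type) (a : X -> G) (w : word X) : G :=
  match w with
  | nil => gone G
  | (x, b) :: w' =>
      gmul G (if b then a x else ginv G (a x)) (eval G X a w')
  end.

Definition laws := word nat -> Prop.

Definition in_variety (V : laws) (G : group) : Prop :=
  forall w, V w -> forall a : nat -> G, eval G nat a w = gone G.

Definition amenable (G : group) : Prop :=
  exists m : (G -> Prop) -> R,
    m (fun _ => True) = 1 /\
    (forall A, 0 <= m A) /\
    (forall A B : G -> Prop, (forall x, A x -> B x -> False) ->
        m (fun x => A x \/ B x) = m A + m B) /\
    (forall (g : G) (A : G -> Prop),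
        m (fun x => A (gmul G (ginv G g) x)) = m A).

(* The relatively free group of V on the set X is the group of words over X
   modulo the relation "equal in every group of V under every assignment";
   multiplication is concatenation. *)
Definition relfree_eq (V : laws) (X : Type) (w1 w2 : word X) : Prop :=
  forall G : group, in_variety V G ->
    forall a : X -> G, eval G X a w1 = eval G X a w2.

Definition relfree_right_orderable (V : laws) (X : Type) : Prop :=
  exists lt : word X -> word X -> Prop,
    (forall w1 w1' w2 w2', relfree_eq V X w1 w1' -> relfree_eq V X w2 w2' ->
        lt w1 w2 -> lt w1' w2') /\
    (forall w, ~ lt w w) /\
    (forall w1 w2 w3, lt w1 w2 -> lt w2 w3 -> lt w1 w3) /\
    (forall w1 w2, relfree_eq V X w1 w2 \/ lt w1 w2 \/ lt w2 w1) /\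
    (forall w1 w2 c, lt w1 w2 -> lt (w1 ++ c) (w2 ++ c)).

(* Main.v *)
From Pilot Require Import Defs.
From Stdlib Require Import Reals List.
Module M.
From HB Require Import structures.
From mathcomp Require Import all_boot boolp zify.
From Stdlib Require Import ClassicalEpsilon ProofIrrelevance FunctionalExtensionality PropExtensionality Lra.
Set Implicit Arguments. Unset Strict Implicit. Unset Printing Implicit Defensive.
Local Open Scope nat_scope.

Definition gT (G : group) : Type := carrier G.
HB.instance Definition _ (G : group) := gen_eqMixin (gT G).
HB.instance Definition _ (G : group) := gen_choiceMixin (gT G).

Local Notation "x *g y" := (gmul _ x y) (at level 40, left associativity).

Definition gmulA' (G : group) := @gmulA G.
Arguments gmulA' {G}.
Section GroupFacts.
Variable G : group.
Implicit Types x y z : G.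

Lemma gmulVr x : x *g ginv G x = gone G.
Proof.
rewrite -[x *g _]gmul1l -{1}(gmulVl _ (ginv G x)).
rewrite -gmulA (gmulA _ (ginv G x) x) gmulVl gmul1l gmulVl //.
Qed.

Lemma gmul1r x : x *g gone G = x.
Proof. by rewrite -(gmulVl _ x) gmulA gmulVr gmul1l. Qed.

Lemma gmulKl x y : ginv G x *g (x *g y) = y.
Proof. by rewrite gmulA gmulVl gmul1l. Qed.

Lemma gmulKr x y : (y *g x) *g ginv G x = y.
Proof. by rewrite -gmulA gmulVr gmul1r. Qed.

Lemma gcancl x y z : x *g y = x *g z -> y = z.
Proof. by move=> H; rewrite -(gmulKl x y) H gmulKl. Qed.

Lemma gcancr x y z : y *g x = z *g x -> y = z.
Proof. by move=> H; rewrite -(gmulKr x y) H gmulKr. Qed.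

Lemma ginv_uniq x y : x *g y = gone G -> ginv G x = y.
Proof. by move=> H; rewrite -[ginv G x]gmul1r -H gmulA gmulVl gmul1l. Qed.

Lemma ginvK x : ginv G (ginv G x) = x.
Proof. by apply: ginv_uniq; rewrite gmulVl. Qed.

Lemma ginvM x y : ginv G (x *g y) = ginv G y *g ginv G x.
Proof.
apply: ginv_uniq; rewrite -gmulA (gmulA _ y) gmulVr gmul1l gmulVr //.
Qed.
End GroupFacts.

Lemma eval_cat (G : group) (X : Type) (a : X -> G) (w1 w2 : word X) :
  eval G X a (w1 ++ w2) = eval G X a w1 *g eval G X a w2.
Proof.
elim: w1 => [|[x b] w IH] /=; first by rewrite gmul1l.
by rewrite IH gmulA.
Qed.

Definition winv (X : Type) (w : word X) : word X :=
  rev (map (fun p => (p.1, ~~ p.2)) w).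

Lemma eval_winv (G : group) (X : Type) (a : X -> G) (w : word X) :
  eval G X a (winv w) = ginv G (eval G X a w).
Proof.
elim: w => [|[x b] w IH] /=.
  by rewrite /winv /=; apply/esym/ginv_uniq; rewrite gmul1l.
rewrite /winv map_cons rev_cons -cats1 eval_cat -/(winv w) IH ginvM /=.
rewrite gmul1r; case: b => //=; by rewrite ginvK.
Qed.

Section RelFree.
Variable V : laws.

Definition weq (w1 w2 : word nat) := relfree_eq V nat w1 w2.

Lemma weq_refl w : weq w w. Proof. by []. Qed.
Lemma weq_sym w1 w2 : weq w1 w2 -> weq w2 w1.
Proof. by move=> H G HG a; rewrite H. Qed.
Lemma weq_trans w1 w2 w3 : weq w1 w2 -> weq w2 w3 -> weq w1 w3.
Proof. by move=> H1 H2 G HG a; rewrite H1 // H2. Qed.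

Definition Rc := {P : word nat -> Prop | exists w, P = weq w}.
Definition cls (w : word nat) : Rc := exist _ (weq w) (ex_intro _ w erefl).

Lemma cls_eq w1 w2 : cls w1 = cls w2 -> weq w1 w2.
Proof.
move=> H; have H1 := f_equal (@proj1_sig _ _) H; simpl in H1.
by rewrite H1; apply: weq_refl.
Qed.

Lemma eq_cls w1 w2 : weq w1 w2 -> cls w1 = cls w2.
Proof.
move=> H; apply: eq_sig_hprop => [x p q|]; first exact: proof_irrelevance.
rewrite /=; apply: functional_extensionality => w.
apply: propositional_extensionality; split => H'.
  exact: weq_trans (weq_sym H) H'.
exact: weq_trans H H'.
Qed.

Definition rep (c : Rc) : word nat :=
  proj1_sig (constructive_indefinite_description _ (proj2_sig c)).

Lemma clsK c : cls (rep c) = c.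
Proof.
rewrite /rep; case: (constructive_indefinite_description _ _) => w Hw.
apply: eq_sig_hprop => [x p q|]; first exact: proof_irrelevance.
by rewrite /= -Hw.
Qed.

Lemma rep_cls w : weq (rep (cls w)) w.
Proof. by apply: cls_eq; rewrite clsK. Qed.

Lemma ev_rep (G : group) (a : nat -> G) w : in_variety V G ->
  eval G nat a (rep (cls w)) = eval G nat a w.
Proof. by move=> HG; apply: rep_cls. Qed.

Definition rmul (c d : Rc) : Rc := cls (rep c ++ rep d).
Definition rone : Rc := cls [::].
Definition rinv (c : Rc) : Rc := cls (winv (rep c)).

Lemma rmulA c d e : rmul c (rmul d e) = rmul (rmul c d) e.
Proof.
apply: eq_cls => G HG a.
by rewrite !eval_cat !ev_rep // !eval_cat gmulA.
Qed.

Lemma rmul1 c : rmul rone c = c.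
Proof.
rewrite -[in RHS](clsK c); apply: eq_cls => G HG a.
by rewrite !eval_cat !ev_rep //= gmul1l.
Qed.

Lemma rmulV c : rmul (rinv c) c = rone.
Proof.
apply: eq_cls => G HG a.
by rewrite !eval_cat !ev_rep // eval_winv gmulVl.
Qed.

Definition Rg : group := @Pilot.Defs.Group Rc rmul rone rinv rmulA rmul1 rmulV.

Definition subst (a : nat -> Rc) (w : word nat) : word nat :=
  flatten (map (fun p => if p.2 then rep (a p.1) else winv (rep (a p.1))) w).

Lemma eval_R (a : nat -> Rg) w : eval Rg nat a w = cls (subst a w).
Proof.
elim: w => [|[x b] w IH] //=.
rewrite IH /subst /= -/(subst a w); apply: eq_cls => G HG c.
rewrite !eval_cat ev_rep //; case: b => //=.
by rewrite /rinv ev_rep.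
Qed.

Lemma ev_subst (G : group) (c : nat -> G) (a : nat -> Rc) w :
  eval G nat c (subst a w) = eval G nat (fun i => eval G nat c (rep (a i))) w.
Proof.
elim: w => [|[x b] w IH] //=.
rewrite eval_cat -/(subst a w) IH; case: b => //=.
by rewrite eval_winv.
Qed.

Lemma R_in : in_variety V Rg.
Proof.
move=> w Hw a; rewrite eval_R; apply: eq_cls => G HG c.
by rewrite ev_subst /= HG.
Qed.

Section Hom.
Variables (Z : group) (HZ : in_variety V Z) (u : nat -> Z).
Definition phi (c : Rg) : Z := eval Z nat u (rep c).
Lemma phiM c d : phi (c *g d) = phi c *g phi d.
Proof. by rewrite /phi /= /rmul ev_rep // eval_cat. Qed.
Lemma phi_gen i : phi (cls [:: (i, true)]) = u i.
Proof. by rewrite /phi ev_rep //= gmul1r. Qed.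
End Hom.

End RelFree.

Lemma size_undup_cat (T : eqType) (s1 s2 : seq T) : uniq s1 -> uniq s2 ->
  size (undup (s1 ++ s2)) + size [seq x <- s1 | x \in s2] = size s1 + size s2.
Proof.
move=> u1 u2; rewrite undup_cat (undup_id u2) size_cat (undup_id u1).
have := count_predC (fun x => x \in s2) s1.
rewrite !size_filter.
have -> : count (predC (fun x => x \in s2)) s1 = count (fun x => x \notin s2) s1 by [].
lia.
Qed.

Lemma sub_size (T : eqType) (s1 s2 : seq T) : uniq s1 -> {subset s1 <= s2} ->
  size s1 <= size s2.
Proof. by move=> u1 sub; apply: uniq_leq_size. Qed.

Lemma sub_size_undup (T : eqType) (s1 s2 : seq T) : {subset s1 <= s2} ->
  size (undup s1) <= size (undup s2).
Proof.
move=> sub; apply: uniq_leq_size; first exact: undup_uniq.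
by move=> x; rewrite !mem_undup; apply: sub.
Qed.

Lemma uniq_snd_inj (A B : eqType) (s : seq (A * B)) v v' w :
  uniq (map snd s) -> (v, w) \in s -> (v', w) \in s -> v = v'.
Proof.
elim: s => [|[a b] s IH] //= /andP[nb us].
rewrite !in_cons; case/orP=> [/eqP E1|h1]; case/orP=> [/eqP E2|h2].
- by case: E1 => -> _; case: E2.
- case: E1 => _ e; exfalso; move/negP: nb; apply; apply/mapP; exists (v', w) => //; by rewrite e.
- case: E2 => _ e; exfalso; move/negP: nb; apply; apply/mapP; exists (v, w) => //; by rewrite e.
- exact: IH.
Qed.

Section Hall.
Variables (A B : eqType) (N : A -> seq B) (a : nat -> A) (b0 : B).
Hypothesis asurj : forall v, exists k, a k = v.
Hypothesis hall : forall L : seq A, uniq L -> size L <= size (undup (flatten (map N L))).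

Definition avail (st : seq (A * B)) (L : seq A) : seq B :=
  undup [seq w <- flatten (map N L) | w \notin map snd st].

Definition avoid (st : seq (A * B)) (L : seq A) := all (fun v => v \notin map fst st) L.

Definition good st := forall L, uniq L -> avoid st L -> size L <= size (avail st L).

Lemma mem_avail st L w : (w \in avail st L) = (w \notin map snd st) && has (fun v => w \in N v) L.
Proof.
rewrite mem_undup mem_filter; congr (_ && _).
apply/flattenP/hasP => [[s /mapP[v vL ->] wN]|[v vL wN]]; first by exists v.
by exists (N v) => //; apply: map_f.
Qed.

Definition crit st L := size (avail st L) = size L.

Lemma crit_union st L1 L2 : good st -> uniq L1 -> uniq L2 -> avoid st L1 -> avoid st L2 ->
  crit st L1 -> crit st L2 -> crit st (undup (L1 ++ L2)).
Proof.
move=> g u1 u2 a1 a2 c1 c2.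
have aU : avoid st (undup (L1 ++ L2)).
  by apply/allP => v; rewrite mem_undup mem_cat => /orP[]; [move/(allP a1)|move/(allP a2)].
have aI : avoid st [seq x <- L1 | x \in L2].
  by apply/allP => v; rewrite mem_filter => /andP[_]; move/(allP a1).
have gU := g _ (undup_uniq _) aU.
have gI := g _ (filter_uniq _ u1) aI.
have sL := size_undup_cat u1 u2.
have sA := size_undup_cat (undup_uniq [seq w <- flatten (map N L1) | w \notin map snd st])
  (undup_uniq [seq w <- flatten (map N L2) | w \notin map snd st]).
have e1 : size (avail st (undup (L1 ++ L2))) = size (undup (avail st L1 ++ avail st L2)).
  apply: perm_size; apply: uniq_perm; try exact: undup_uniq.
  move=> w; rewrite mem_undup mem_cat !mem_avail.
  rewrite -andb_orr; congr (_ && _); apply/hasP/orP.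
    by case=> v; rewrite mem_undup mem_cat => /orP[] vL wN; [left|right]; apply/hasP; exists v.
  by case=> /hasP[v vL wN]; exists v => //; rewrite mem_undup mem_cat vL ?orbT.
have e2 : size (avail st [seq x <- L1 | x \in L2]) <= size [seq x <- avail st L1 | x \in avail st L2].
  apply: sub_size; first exact: undup_uniq.
  move=> w; rewrite mem_filter !mem_avail => /andP[nw /hasP[v]].
  rewrite mem_filter => /andP[vL2 vL1] wN.
  by rewrite nw /=; apply/andP; split; apply/hasP; exists v.
rewrite /crit in c1 c2 *.
rewrite /avail in c1 c2 e1 e2; rewrite /avail.
move: gU gI; rewrite /avail; lia.
Qed.

Lemma avail_cons_size st L v w :
  size (avail st L) <= (size (avail ((v, w) :: st) L)).+1.
Proof.
rewrite -[X in _ <= X]/(size (w :: avail ((v, w) :: st) L)).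
apply: sub_size; first exact: undup_uniq.
move=> x; rewrite in_cons !mem_avail /= in_cons.
case: (x =P w) => //= /eqP ne /andP[-> ->]; by [].
Qed.

Lemma hall_step st v : good st -> v \notin map fst st ->
  exists w, ((w \in N v) && (w \notin map snd st)) /\ good ((v, w) :: st).
Proof.
move=> g vn; apply: contrapT => H.
have H' : forall w, w \in N v -> w \notin map snd st ->
    exists L, [/\ uniq L, avoid st L, v \notin L, crit st L & w \in avail st L].
  move=> w wN wn; have : ~ good ((v, w) :: st).
    by move=> gw; apply: H; exists w; rewrite wN wn.
  move=> ng; apply: contrapT => nE; apply: ng => L uL aL.
  have aL' : avoid st L /\ v \notin L.
    split; first by apply/allP => x xL; move: (allP aL x xL); rewrite /= in_cons negb_or => /andP[].
    by apply/negP => vL; move: (allP aL v vL); rewrite /= in_cons eqxx.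
  case: aL' => aL1 vL.
  have gL := g L uL aL1.
  have sz := avail_cons_size st L v w.
  case: (leqP (size L) (size (avail ((v, w) :: st) L))) => // lt.
  exfalso; apply: nE; exists L; split => //.
    by rewrite /crit; lia.
  apply: contraT => nw.
  have : size (avail st L) <= size (avail ((v, w) :: st) L).
    apply: sub_size; first exact: undup_uniq.
    move=> x xa; have xa' := xa; rewrite mem_avail in xa'; case/andP: xa' => xn xh.
    rewrite mem_avail /= in_cons negb_or xn xh !andbT.
    by apply/eqP => ex; move: nw; rewrite -ex xa.
  move=> h; move: (leq_trans gL h); rewrite leqNgt lt //.
set opts := [seq w <- N v | w \notin map snd st].
have claim : forall ws : seq B, {subset ws <= opts} ->
    exists E, [/\ uniq E, avoid st E, v \notin E, crit st E & {subset ws <= avail st E}].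
  elim => [|w ws IH] sub.
    by exists [::]; split => //; rewrite /crit /avail.
  have sub' : {subset ws <= opts} by move=> x xs; apply: sub; rewrite in_cons xs orbT.
  have [E [uE aE vE cE sE]] := IH sub'.
  have := sub w (mem_head _ _); rewrite mem_filter => /andP[wn wN].
  have [L [uL aL vL cL wL]] := H' w wN wn.
  exists (undup (E ++ L)); split.
  - exact: undup_uniq.
  - by apply/allP => x; rewrite mem_undup mem_cat => /orP[]; [move/(allP aE)|move/(allP aL)].
  - by rewrite mem_undup mem_cat negb_or vE.
  - exact: crit_union.
  - move=> x; rewrite in_cons => /orP[/eqP ->|xs].
      move: wL; rewrite !mem_avail => /andP[-> /hasP[y yL yN]].
      by apply/hasP; exists y => //; rewrite mem_undup mem_cat yL orbT.
    move: (sE x xs); rewrite !mem_avail => /andP[-> /hasP[y yL yN]].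
    by apply/hasP; exists y => //; rewrite mem_undup mem_cat yL.
have [E [uE aE vE cE sE]] := claim opts (fun x h => h).
have uE' : uniq (v :: E) by rewrite /= vE.
have aE' : avoid st (v :: E) by rewrite /avoid /= vn.
have := g _ uE' aE'.
have : size (avail st (v :: E)) <= size (avail st E).
  apply: sub_size; first exact: undup_uniq.
  move=> x; rewrite mem_avail => /andP[xn /hasP[y]]; rewrite in_cons => /orP[/eqP ->|yE] xN.
    by apply: sE; rewrite mem_filter xn.
  by rewrite mem_avail xn; apply/hasP; exists y.
rewrite /crit in cE; rewrite cE /= => h1 h2.
by move: (leq_trans h2 h1); rewrite ltnn.
Qed.

Definition nextst (st : seq (A * B)) (k : nat) : seq (A * B) :=
  if a k \in map fst st then st else
  (a k, epsilon (inhabits b0) (fun w => ((w \in N (a k)) && (w \notin map snd st)) /\ good ((a k, w) :: st))) :: st.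

Fixpoint stf (k : nat) : seq (A * B) :=
  match k with 0 => [::] | k'.+1 => nextst (stf k') k' end.

Definition Inv st := [/\ good st, uniq (map fst st), uniq (map snd st) & all (fun p => p.2 \in N p.1) st].

Lemma Inv_stf k : Inv (stf k).
Proof.
elim: k => [|k [g u1 u2 al]] /=.
  split => //; move=> L uL _; rewrite /avail /=.
  rewrite (@eq_filter _ _ predT) ?filter_predT; [exact: hall|by []].
rewrite /nextst; case: ifPn => // vn.
set P := fun w => _.
have ex := hall_step g vn.
have := epsilon_spec (inhabits b0) P ex; set w := epsilon _ _.
move=> [/andP[wN wn] gw]; split => //=.
- by rewrite vn.
- by rewrite wn.
- by rewrite wN.
Qed.

Lemma stf_mono k j : {subset stf k <= stf (k + j)}.
Proof.
elim: j => [|j IH]; first by rewrite addn0.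
move=> p pk; rewrite addnS /= /nextst; case: ifP => _; first exact: IH.
by rewrite in_cons IH ?orbT.
Qed.

Lemma stf_dom k : a k \in map fst (stf k.+1).
Proof.
rewrite /= /nextst; case: ifP => // _.
by rewrite /= in_cons eqxx.
Qed.

Lemma hall_inf : exists f : A -> B, injective f /\ forall v, f v \in N v.
Proof.
pose f v := epsilon (inhabits b0) (fun w => exists k, (v, w) \in stf k).
have fP v : exists k, (v, f v) \in stf k.
  apply: (epsilon_spec (inhabits b0) (fun w => exists k, (v, w) \in stf k)).
  have [k <-] := asurj v.
  have /mapP[[x w] xin /= ex] := stf_dom k.
  by exists w, k.+1; rewrite ex.
exists f; split.
  move=> v v' e; have [k hk] := fP v; have [k' hk'] := fP v'.
  have [_ _ u2 _] := Inv_stf (k + k').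
  apply: (uniq_snd_inj u2 (stf_mono _ hk)).
  by rewrite e addnC; apply: stf_mono.
move=> v; have [k hk] := fP v; have [_ _ _ al] := Inv_stf k.
exact: (allP al _ hk).
Qed.
End Hall.

Definition sumR (I : Type) (r : seq I) (F : I -> R) : R :=
  foldr (fun i acc => Rplus (F i) acc) R0 r.

Lemma sumR_cat (I : Type) (r1 r2 : seq I) F : sumR (r1 ++ r2) F = Rplus (sumR r1 F) (sumR r2 F).
Proof. elim: r1 => [|i r IH] /=; [by rewrite Rplus_0_l | by rewrite IH Rplus_assoc]. Qed.

Lemma sumR_map (I J : Type) (r : seq I) (h : I -> J) F : sumR (map h r) F = sumR r (fun i => F (h i)).
Proof. by elim: r => [|i r IH] //=; rewrite IH. Qed.

Lemma sumR_ext (I : Type) (r : seq I) F1 F2 : (forall i, F1 i = F2 i) -> sumR r F1 = sumR r F2.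
Proof. by move=> H; elim: r => [|i r IH] //=; rewrite IH H. Qed.

Section Mean.
Variables (T : Type) (mu : (T -> Prop) -> R).
Hypothesis mu1 : mu (fun _ => True) = R1.
Hypothesis mu0 : forall A, Rle R0 (mu A).
Hypothesis muadd : forall A B : T -> Prop, (forall x, A x -> B x -> False) ->
        mu (fun x => A x \/ B x) = Rplus (mu A) (mu B).

Lemma mu_ext A B : (forall y, A y <-> B y) -> mu A = mu B.
Proof.
move=> H; congr mu; apply: functional_extensionality => y.
exact: propositional_extensionality.
Qed.

Lemma mu_empty : mu (fun _ => False) = R0.
Proof.
have := muadd (A := fun _ => False) (B := fun _ => False) (fun _ h _ => h).
rewrite (@mu_ext (fun x => False \/ False) (fun _ => False)); last by move=> y; tauto.
move=> h; lra.
Qed.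

Lemma mu_le1 A : Rle (mu A) R1.
Proof.
have := muadd (A := A) (B := fun x => ~ A x) (fun _ h h' => h' h).
rewrite (@mu_ext (fun x => A x \/ ~ A x) (fun _ => True)); last first.
  by move=> y; split => // _; apply: classic.
have := mu0 (fun x => ~ A x); lra.
Qed.

Lemma mu_list (I : eqType) (r : seq I) (P : I -> T -> Prop) : uniq r ->
  (forall i j y, i \in r -> j \in r -> i != j -> P i y -> P j y -> False) ->
  mu (fun y => exists2 i, i \in r & P i y) = sumR r (fun i => mu (P i)).
Proof.
elim: r => [|i r IH] /=.
  move=> _ _; rewrite -mu_empty; apply: mu_ext => y; split => // [[i]]; by [].
move=> /andP[ir ur] disj.
rewrite -IH //; last first.
  by move=> i' j y i'r jr; apply: disj; rewrite in_cons ?i'r ?jr orbT.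
rewrite -muadd; last first.
  move=> y Pi [j jr Pj]; apply: (disj i j y) => //; rewrite ?in_cons ?eqxx ?jr ?orbT //.
  by apply/eqP => e; move: ir; rewrite e jr.
apply: mu_ext => y; split.
  by case=> j; rewrite in_cons => /orP[/eqP ->|jr] Pj; [left|right; exists j].
by case=> [Pi|[j jr Pj]]; [exists i; rewrite ?mem_head|exists j; rewrite ?in_cons ?jr ?orbT].
Qed.
End Mean.

Lemma gmulVK (G : group) (x y : G) : (y *g ginv G x) *g x = y.
Proof. by rewrite -gmulA gmulVl gmul1r. Qed.

Definition gm (G : group) (x y : gT G) : gT G := gmul G x y.
Definition prods (G : group) (F X : seq (gT G)) : seq (gT G) :=
  undup [seq gm f x | f <- F, x <- X].

Lemma folner (G : group) (Ham : amenable G) (en : nat -> (gT G * bool)%type)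
  (esurj : forall p, exists k, en k = p) (X : seq (gT G)) :
  exists F : seq (gT G), [/\ uniq F, F != [::] &
     size (prods F X) <= 2 * size F].
Proof.
apply: contrapT => H.
have H1 : forall F : seq (gT G), uniq F -> F != [::] ->
    2 * size F < size (prods F X).
  move=> F uF nF; rewrite ltnNge; apply/negP => le; apply: H; by exists F.
pose N (p : (gT G * bool)%type) : seq (gT G) := [seq gm p.1 x | x <- X].
have hall : forall L : seq (gT G * bool)%type, uniq L ->
    size L <= size (undup (flatten (map N L))).
  move=> L uL; case: L uL => [//|p0 L0] uL.
  set L := p0 :: L0 in uL *.
  pose F := undup (map fst L).
  have nF : F != [::].
    apply/eqP => e0; have : p0.1 \in F by rewrite /F mem_undup /= in_cons eqxx.
    by rewrite e0.
  have s1 : size L <= 2 * size F.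
    have sub : {subset L <= [seq (f, b) | f <- F, b <- [:: true; false]]}.
      move=> -[f b] pin; apply/allpairsP; exists (f, b) => /=; split => //.
        by rewrite /F mem_undup; apply/mapP; exists (f, b).
      by case: b {pin}.
    have := sub_size uL sub; rewrite size_allpairs => h.
    by rewrite mulnC; exact: h.
  have s2 : size (undup (flatten (map N L))) = size (prods F X).
    apply: perm_size; apply: uniq_perm; try exact: undup_uniq.
    move=> y; rewrite /prods !mem_undup; apply/idP/idP.
      case/flatten_mapP=> -[f b] pL; rewrite /N /= => /mapP[x xX ->].
      apply/allpairsP; exists (f, x) => /=; split => //.
      by rewrite /F mem_undup; apply/mapP; exists (f, b).
    case/allpairsP=> [[f x] [fF xX ->]]; rewrite [(f, x).1]/= [(f, x).2]/= in fF xX *; move: fF; rewrite /F mem_undup => /mapP[[f' b] pL ef]; simpl in ef.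
    rewrite -/L. apply/flatten_mapP; exists (f', b) => //.
    by rewrite /N /= ef; apply: map_f.
  have h := H1 F (undup_uniq _) nF; rewrite s2; apply: leq_trans s1 _; exact: ltnW h.
have [f [finj fN]] := @hall_inf _ _ N en (gone G) esurj hall.
case: Ham => m [m1 [m0 [madd minv]]].
pose mr (A : gT G -> Prop) := m (fun x => A (ginv G x)).
have mr1 : mr (fun _ => True) = R1 by [].
have mr0 : forall A, Rle R0 (mr A) by move=> A; apply: m0.
have mradd : forall A B : gT G -> Prop, (forall x, A x -> B x -> False) ->
    mr (fun x => A x \/ B x) = Rplus (mr A) (mr B).
  by move=> A B d; apply: madd => x; apply: d.
have mrinv : forall (g : gT G) (A : gT G -> Prop), mr (fun y => A (y *g g)) = mr A.
  move=> g A; rewrite /mr -(minv g (fun z => A (ginv G z))).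
  apply: (mu_ext m) => x; by rewrite ginvM ginvK.
pose Xu := undup X.
pose Aset (x : gT G) (b : bool) := fun g : gT G => f (g, b) = g *g x.
have cover : forall b, sumR Xu (fun x => mr (Aset x b)) = R1.
  move=> b; rewrite -(mu_list mradd (undup_uniq X)); last first.
    move=> i j y _ _ ij; rewrite /Aset => -> e2; move/eqP: ij; apply.
    exact: gcancl e2.
  rewrite -mr1; apply: (mu_ext mr) => g; split => // _.
  have := fN (g, b); rewrite /N => /mapP[x xX ex].
  by exists x; rewrite ?mem_undup.
pose Bset (p : (gT G * bool)%type) := fun y => Aset p.1 p.2 (y *g ginv G p.1).
pose idx : seq (gT G * bool)%type := [seq (x, true) | x <- Xu] ++ [seq (x, false) | x <- Xu].
have uidx : uniq idx.
  rewrite cat_uniq; apply/and3P; split.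
  - by rewrite map_inj_uniq ?undup_uniq // => x y [].
  - apply/hasPn => p /mapP[x _ ->]; apply/negP => /mapP[y _ []] //.
  - by rewrite map_inj_uniq ?undup_uniq // => x y [].
have tot : sumR idx (fun p => mr (Bset p)) = mr (fun y => exists2 p, p \in idx & Bset p y).
  rewrite (mu_list mradd uidx) //.
  move=> [x b] [x' b'] y _ _ ne; rewrite /Bset /Aset /= => e1 e2.
  rewrite !gmulVK in e1 e2.
  have := finj _ _ (etrans e1 (esym e2)); case => E eb.
  have ex := gcancl E.
  move/eqP: ne; apply; by rewrite -(ginvK x) ex ginvK eb.
have le1 := mu_le1 mr1 mr0 mradd (fun y => exists2 p, p \in idx & Bset p y).
rewrite -tot in le1.
rewrite (@sumR_ext _ idx (fun p => mr (Bset p)) (fun p => mr (Aset p.1 p.2))) in le1; last first.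
  by move=> [x b]; rewrite /Bset mrinv.
rewrite sumR_cat !sumR_map /= !cover in le1.
lra.
Qed.

Lemma count_sum (T : Type) (a : pred T) (r : seq T) : count a r = \sum_(x <- r) (a x : nat).
Proof. by elim: r => [|x r IH] /=; rewrite ?big_nil ?big_cons ?IH. Qed.

Lemma sum_mul2 (T : Type) (r : seq T) (f : T -> nat) :
  \sum_(x <- r) (2 * f x) = 2 * \sum_(x <- r) f x.
Proof. by elim: r => [|x r IH]; rewrite ?big_nil ?big_cons ?IH ?mulnDr. Qed.

Lemma sum_leq (T : eqType) (r : seq T) (f g : T -> nat) :
  (forall x, x \in r -> f x <= g x) -> \sum_(x <- r) f x <= \sum_(x <- r) g x.
Proof.
elim: r => [|x r IH] H; rewrite ?big_nil ?big_cons //.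
apply: leq_add; first by apply: H; rewrite mem_head.
by apply: IH => y yr; apply: H; rewrite in_cons yr orbT.
Qed.

Lemma sum_ltn (T : eqType) (r : seq T) (f g : T -> nat) :
  (forall x, x \in r -> f x <= g x) -> (exists2 x, x \in r & f x < g x) ->
  \sum_(x <- r) f x < \sum_(x <- r) g x.
Proof.
elim: r => [|x r IH] H [y]; rewrite ?big_nil ?big_cons //.
have Hr : forall z, z \in r -> f z <= g z by move=> z zr; apply: H; rewrite in_cons zr orbT.
rewrite in_cons => /orP[/eqP ->|yr] lt.
  by apply: leq_trans (leq_add lt (sum_leq Hr)); rewrite addSn.
have := IH Hr (ex_intro2 _ _ y yr lt); have := H x (mem_head _ _); lia.
Qed.

Lemma count_le_iota (K N : nat) : count (fun l => l <= K) (iota 1 N) = minn K N.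
Proof.
elim: N => [|N IH]; first by rewrite minn0.
rewrite -[N.+1]addn1 iotaD count_cat IH /=; lia.
Qed.

Lemma count_mem_cons (T : eqType) (t : T) (Ts s : seq T) : t \notin Ts ->
  count (mem (t :: Ts)) s = count_mem t s + count (mem Ts) s.
Proof.
move=> tn; elim: s => [|x s IH] //=; rewrite IH in_cons.
case: (x =P t) => [->|_] /=; last by lia.
by rewrite (negbTE tn); lia.
Qed.

Lemma sum_count_uniq (T : eqType) (Ts s : seq T) : uniq Ts ->
  \sum_(t <- Ts) count_mem t s = count (mem Ts) s.
Proof.
elim: Ts => [|t Ts IH] /=; first by rewrite big_nil; elim: s.
by case/andP=> tn u; rewrite big_cons IH // count_mem_cons.
Qed.

(* ---------- transfer (layer cake) ---------- *)
Lemma transfer (G Z : group) (ph : gT G -> gT Z)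
  (phM : forall x y, ph (gm x y) = gm (ph x) (ph y)) (X F : seq (gT G)) :
  uniq F -> F != [::] -> size (prods F X) <= 2 * size F ->
  exists S : seq (gT Z), [/\ uniq S, S != [::], size S <= size F &
     size (prods S (map ph X)) <= 2 * size S].
Proof.
move=> uF nF hF.
pose U := map ph X.
pose c (s : gT Z) := count (fun f => ph f == s) F.
pose Sp := undup (map ph F).
pose S (l : nat) := [seq s <- Sp | l <= c s].
pose T (l : nat) := prods (S l) U.
pose FX := prods F X.
pose N := size F.
have cle : forall s, c s <= N by move=> s; apply: count_size.
have claim1 : \sum_(l <- iota 1 N) size (S l) = N.
  under eq_bigr => l _ do rewrite size_filter count_sum.
  rewrite exchange_big /=.
  under eq_bigr => s _ do rewrite -count_sum count_le_iota (minn_idPl (cle s)).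
  rewrite /c; under eq_bigr => s _ do rewrite -[count _ F]/(count (preim ph (pred1 s)) F) -count_map.
  rewrite sum_count_uniq ?undup_uniq // (@eq_in_count _ _ predT); last first.
    by move=> y yin; rewrite /= /Sp mem_undup yin.
  by rewrite count_predT size_map.
have cK : forall l t, t \in T l -> l <= count (fun y => ph y == t) FX.
  move=> l t; rewrite /T /prods mem_undup => /allpairsP[[s u] [/= sS uU ->]].
  move: sS; rewrite mem_filter => /andP[ls _].
  move: uU => /mapP[x xX ->].
  apply: leq_trans ls _; rewrite /c -size_filter -size_filter.
  have -> : size [seq f <- F | ph f == s] = size [seq gm f x | f <- [seq f <- F | ph f == s]].
    by rewrite size_map.
  apply: sub_size.
    rewrite map_inj_in_uniq ?filter_uniq // => f1 f2 _ _; exact: gcancr.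
  move=> y /mapP[f]; rewrite mem_filter => /andP[/eqP ef fF] ->.
  rewrite mem_filter /FX /prods mem_undup phM ef eqxx /=.
  by apply/allpairsP; exists (f, x).
pose Ts := undup (map ph FX).
have claim2 : \sum_(l <- iota 1 N) size (T l) <= size FX.
  apply: (@leq_trans (\sum_(l <- iota 1 N) count (fun t => t \in T l) Ts)).
    apply: sum_leq => l _; rewrite -size_filter; apply: sub_size; first exact: undup_uniq.
    move=> t tT; rewrite mem_filter tT /= /Ts mem_undup.
    move: tT; rewrite /T /prods mem_undup => /allpairsP[[s u] [/= sS uU ->]].
    move: sS; rewrite mem_filter /Sp mem_undup => /andP[_ /mapP[f fF ->]].
    move: uU => /mapP[x xX ->]; rewrite -phM; apply: map_f.
    by rewrite /FX /prods mem_undup; apply/allpairsP; exists (f, x).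
  under eq_bigr => l _ do rewrite count_sum.
  rewrite exchange_big /=.
  apply: (@leq_trans (\sum_(t <- Ts) count_mem t (map ph FX))).
    apply: sum_leq => t _; rewrite -count_sum.
    apply: (@leq_trans (count (fun l => l <= count (fun y => ph y == t) FX) (iota 1 N))).
      by apply: sub_count => l; apply: cK.
    rewrite count_le_iota count_map; exact: geq_minl.
  rewrite sum_count_uniq ?undup_uniq // -(size_map ph FX); exact: count_size.
have hFX : size FX <= 2 * N by [].
apply: contrapT => H.
have Hl : forall l, l \in iota 1 N -> 2 * size (S l) <= size (T l).
  move=> l _; case: (boolP (S l == [::])) => [/eqP E|ne].
    by rewrite E muln0.
  rewrite leqNgt; apply/negP => lt; apply: H; exists (S l); split => //.
  - exact/filter_uniq/undup_uniq.
  - rewrite size_filter; apply: (leq_trans (count_size _ _)).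
    by rewrite /Sp (leq_trans (size_undup _)) // size_map.
  - exact: ltnW.
have [f0 [F0 eF]] : exists f0 F0, F = f0 :: F0.
  by move: nF; case: (F) => // f0 F0 _; exists f0, F0.
have N1 : 1 \in iota 1 N by rewrite mem_iota /N eF.
have S1 : S 1 = Sp.
  rewrite /S; apply/all_filterP/allP => s; rewrite /Sp mem_undup => /mapP[f fF ->].
  by rewrite /c -has_count; apply/hasP; exists f.
have lt1 : 2 * size (S 1) < size (T 1).
  move: (Hl 1 N1); rewrite leq_eqVlt => /orP[/eqP E|//].
  exfalso; apply: H; exists (S 1); split.
  - exact/filter_uniq/undup_uniq.
  - rewrite S1 /Sp; apply/eqP => e0.
    have : ph f0 \in undup (map ph F) by rewrite mem_undup eF mem_head.
    by rewrite e0.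
  - rewrite size_filter; apply: (leq_trans (count_size _ _)).
    by rewrite /Sp (leq_trans (size_undup _)) // size_map.
  - by rewrite -E.
have := sum_ltn Hl (ex_intro2 _ _ 1 N1 lt1).
rewrite sum_mul2 claim1 => h.
move: (leq_trans h claim2) hFX; lia.
Qed.

Lemma In_mem (T : eqType) (x : T) (s : seq T) : List.In x s <-> x \in s.
Proof.
elim: s => [|y s IH] //=; rewrite in_cons; split.
  by case=> [->|/IH ->]; rewrite ?eqxx ?orbT.
by case/orP=> [/eqP ->|/IH]; [left|right].
Qed.

Lemma uniq_NoDup (T : eqType) (s : seq T) : uniq s -> List.NoDup s.
Proof.
elim: s => [|x s IH] /=; first by constructor.
case/andP=> xn u; constructor; last exact: IH.
by move/In_mem => h; rewrite h in xn.
Qed.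

Lemma size_length (T : Type) (s : seq T) : size s = List.length s.
Proof. by elim: s => //= x s ->. Qed.

Lemma NoDup_uniq (T : eqType) (s : seq T) : List.NoDup s -> uniq s.
Proof.
elim: s => [|x s IH] //= H; inversion H; subst.
by rewrite IH // andbT; apply/negP => /In_mem.
Qed.

Theorem main (V : laws) (Hamen : forall G : group, in_variety V G -> amenable G) :
  exists g : nat -> nat,
    forall Z : group, in_variety V Z ->
    forall (n : nat) (U : list Z), List.NoDup U -> List.length U = n ->
    exists F : list Z,
      F <> nil /\ List.NoDup F /\ Peano.le (List.length F) (g n) /\
      exists FU : list Z,
        List.NoDup FU /\
        (forall x, List.In x FU <-> exists f u, List.In f F /\ List.In u U /\ x = gmul Z f u) /\
        Peano.le (List.length FU) (Nat.mul 2 (List.length F)).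
Proof.
pose RG := Rg V.
pose Xn (n : nat) : seq (gT RG) := [seq (cls V [:: (i, true)] : gT RG) | i <- iota 0 n].
pose en (k : nat) : (gT RG * bool)%type :=
  match @unpickle (seq (nat * bool) * bool)%type k with
  | Some (w, b) => (cls V w, b) | None => (rone V, true) end.
have esurj : forall p, exists k, en k = p.
  move=> [c b]; exists (pickle ((rep c : seq (nat * bool)), b)).
  by rewrite /en pickleK clsK.
have Hfol := fun n => folner (Hamen _ (@R_in V)) esurj (Xn n).
pose Fs n := proj1_sig (constructive_indefinite_description _ (Hfol n)).
exists (fun n => size (Fs n)).
move=> Z HZ n U ndU lenU.
have [uF nF hF] := proj2_sig (constructive_indefinite_description _ (Hfol n)).
rewrite -/(Fs n) in uF nF hF.
pose u (i : nat) : Z := nth (gone Z) U i.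
pose ph (c : gT RG) : gT Z := @phi V Z u c.
have phM : forall x y, ph (gm x y) = gm (ph x) (ph y) by move=> x y; exact: (phiM HZ).
have eU : map ph (Xn n) = (U : seq (gT Z)).
  rewrite /Xn -map_comp.
  rewrite (@eq_map _ _ _ u); last by move=> i; rewrite /= /ph (phi_gen HZ).
  rewrite -lenU -size_length.
  exact: (@mkseq_nth (gT Z) (gone Z) U).
have [S [uS nS sS hS]] := transfer phM uF nF hF.
rewrite eU in hS.
exists S; split; first by move=> e; rewrite e in nS.
split; first exact (uniq_NoDup uS).
split; first by apply/leP; rewrite -size_length.
exists (prods S U); split; first exact (uniq_NoDup (undup_uniq [seq gm f x | f <- S, x <- (U : seq (gT Z))])).
split.
  move=> x; split.
    move=> /(@In_mem (gT Z) x (prods S U)); rewrite /prods mem_undup => /allpairsP[[f v] [/= fS vU ->]].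
    exists f, v; split; first exact/(@In_mem (gT Z)).
    by split; first exact/(@In_mem (gT Z)).
  case=> f [v [fS [vU ->]]]; apply/(@In_mem (gT Z)); rewrite /prods mem_undup.
  apply/allpairsP; exists (f, v); split => //=; exact/(@In_mem (gT Z)).
apply/leP; rewrite -!size_length; exact: hS.
Qed.
End M.

Theorem lemma3p2 (V : laws)
  (Hamen : forall G : group, in_variety V G -> amenable G)
  (Hord : forall X : Type, relfree_right_orderable V X) :
  exists g : nat -> nat,
    forall Z : group, in_variety V Z ->
    forall (n : nat) (U : list Z), NoDup U -> length U = n ->
    exists F : list Z,
      F <> nil /\ NoDup F /\ (length F <= g n)%nat /\
      exists FU : list Z,
        NoDup FU /\
        (forall x, In x FU <-> exists f u, In f F /\ In u U /\ x = gmul Z f u) /\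
        (length FU <= 2 * length F)%nat.
Proof.
  exact (@M.main V Hamen).
Qed.
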